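(* Let $\mathcal E$ be an evolution algebra of a ''chicken'' population (EACP) over a field $K$ with natural basis $\{h_1,\dots,h_n,r\}$ and matrix of structural constants $M=A\oplus \mathbf b$, where $A=(a_{ij})_{i,j=1}^n$ and $\mathbf b=(b_1,\dots,b_n)^T$. Then for every $m\geq 1$ and every $i=1,\dots,n$: \begin{itemize} \item[(i)] $R_r^m(h_i)=(A^m\mathbf h)_i+(A^{m-1}\mathbf b)_i\, r$; \item[(ii)] $(h_ir)^{[m]}=\gamma_m\left[(A^{m+1}\mathbf h)_i+(A^{m}\mathbf b)_i\, r\right]$, where the scalars $\gamma_m$ (depending on $i$) are defined recursively by $\gamma_1=2b_i$ and $\gamma_{m+1}=2\gamma_m^2\,(A^m\mathbf b)_i$. \end{itemize}
   Context: An EACP over a field $K$ is a $K$-algebra $\mathcal E$ with a basis $\{h_1,\dots,h_n,r\}$ (a natural basis) such that $h_ir=rh_i=\sum_{j=1}^n a_{ij}h_j+b_ir$, $h_ih_j=0$ for all $i,j=1,\dots,n$, and $rr=0$. Write $A^m=(a^{(m)}_{ij})$ for the $m$-th power of $A$ (with $A^0$ the identity matrix), $(A^m\mathbf h)_i=\sum_{j=1}^n a^{(m)}_{ij}h_j$, and $(A^m\mathbf b)_i=\sum_{j=1}^n a^{(m)}_{ij}b_j$. The right multiplication operator is $R_r(x)=xr$, and $R_r^m$ is its $m$-fold iterate. Plenary powers are defined by $a^{[1]}=a\cdot a$ and $a^{[m]}=a^{[m-1]}a^{[m-1]}$ for $m\geq 2$. *)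

(* Defs.v *)
From HB Require Import structures.
From mathcomp Require Import all_boot all_order all_algebra.
Set Implicit Arguments. Unset Strict Implicit. Unset Printing Implicit Defensive.
Import GRing.Theory.
Local Open Scope ring_scope.

(* m-th power of a square matrix, A^0 = identity (defined for every n,
   including n = 0, where 'M_n has no ring structure). *)
Definition mxpow (K : fieldType) (n : nat) (A : 'M[K]_n) (m : nat) : 'M[K]_n :=
  iter m (fun B => B *m A) 1%:M.

Definition Rmul_iter (V : Type) (mul : V -> V -> V) (r : V) (m : nat) (x : V) : V :=
  iter m (fun y => mul y r) x.

Definition plen (V : Type) (mul : V -> V -> V) (m : nat) (a : V) : V :=
  iter m (fun y => mul y y) a.

(* Main.v *)
Require Import Defs.
From HB Require Import structures.
From mathcomp Require Import all_boot all_order all_algebra.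
From mathcomp Require Import ring.
Import GRing.Theory.
Local Open Scope ring_scope.

Theorem proposition3p1
  (K : fieldType) (n : nat) (V : lmodType K) (mul : V -> V -> V)
  (mulDl : forall x y z, mul (x + y) z = mul x z + mul y z)
  (mulDr : forall x y z, mul x (y + z) = mul x y + mul x z)
  (mulZl : forall (c : K) x y, mul (c *: x) y = c *: mul x y)
  (mulZr : forall (c : K) x y, mul x (c *: y) = c *: mul x y)
  (h : 'I_n -> V) (r : V)
  (hfree : forall (c : 'I_n -> K) (d : K),
      \sum_(j < n) c j *: h j + d *: r = 0 -> (forall j, c j = 0) /\ d = 0)
  (hspan : forall x : V, exists (c : 'I_n -> K) (d : K),
      x = \sum_(j < n) c j *: h j + d *: r)
  (A : 'M[K]_n) (b : 'cV[K]_n)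
  (hr : forall i, mul (h i) r = \sum_(j < n) A i j *: h j + b i ord0 *: r)
  (rh : forall i, mul r (h i) = \sum_(j < n) A i j *: h j + b i ord0 *: r)
  (hh : forall i j, mul (h i) (h j) = 0)
  (rr : mul r r = 0)
  (gamma : 'I_n -> nat -> K)
  (gamma1 : forall i, gamma i 1%N = 2 * b i ord0)
  (gammaS : forall i m, (1 <= m)%N ->
      gamma i m.+1 = 2 * gamma i m ^+ 2 * (mxpow A m *m b) i ord0) :
  forall (m : nat) (i : 'I_n), (1 <= m)%N ->
    Rmul_iter mul r m (h i)
      = \sum_(j < n) mxpow A m i j *: h j + (mxpow A m.-1 *m b) i ord0 *: r
    /\
    plen mul m (mul (h i) r)
      = gamma i m *: (\sum_(j < n) mxpow A m.+1 i j *: h j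
                      + (mxpow A m *m b) i ord0 *: r).
Proof.
have mul0l : forall z, mul 0 z = 0.
  by move=> z; have := mulZl 0 0 z; rewrite !scale0r.
have mul0r : forall z, mul z 0 = 0.
  by move=> z; have := mulZr 0 z 0; rewrite !scale0r.
have sumL : forall (F : 'I_n -> V) z, mul (\sum_j F j) z = \sum_j mul (F j) z.
  move=> F z; exact: (big_morph (fun x => mul x z) (fun x y => mulDl x y z) (mul0l z)).
have sumR : forall (F : 'I_n -> V) z, mul z (\sum_j F j) = \sum_j mul z (F j).
  move=> F z; exact: (big_morph (fun x => mul z x) (fun x y => mulDr z x y) (mul0r z)).
set W := fun (v : 'I_n -> K) (c : K) => \sum_(j < n) v j *: h j + c *: r.
have mulSr : forall v : 'I_n -> K, mul (\sum_j v j *: h j) r =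
   W (fun k => \sum_j v j * A j k) (\sum_j v j * b j ord0).
  move=> v; rewrite sumL /W.
  under eq_bigr do rewrite mulZl hr scalerDr scaler_sumr.
  rewrite big_split /= exchange_big /= [in RHS]scaler_suml.
  congr (_ + _); first (apply: eq_bigr => k _; rewrite scaler_suml;
    apply: eq_bigr => j _; by rewrite scalerA).
  by apply: eq_bigr => j _; rewrite scalerA.
have mulSr' : forall v : 'I_n -> K, mul r (\sum_j v j *: h j) =
   mul (\sum_j v j *: h j) r.
  move=> v; rewrite sumR sumL; apply: eq_bigr => j _.
  by rewrite mulZr mulZl hr rh.
have mulSS : forall v : 'I_n -> K, mul (\sum_j v j *: h j) (\sum_j v j *: h j) = 0.
  move=> v; rewrite sumL big1 // => j _; rewrite sumR big1 // => k _.
  by rewrite mulZl mulZr hh !scaler0.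
have mulWr : forall v c, mul (W v c) r =
   W (fun k => \sum_j v j * A j k) (\sum_j v j * b j ord0).
  by move=> v c; rewrite /W mulDl mulZl rr scaler0 addr0 mulSr.
have mulWW : forall v c, mul (W v c) (W v c) =
   (2 * c) *: W (fun k => \sum_j v j * A j k) (\sum_j v j * b j ord0).
  move=> v c; rewrite {1 2}/W !mulDl !mulDr mulSS !mulZl !mulZr rr mulSr' mulSr.
  by rewrite !scaler0 addr0 add0r -scalerDl -mulr2n mulr_natl.
have P1 : mxpow A 1 = A by rewrite /mxpow /= mul1mx.
have PS : forall m, mxpow A m.+1 = mxpow A m *m A by [].
move=> m i; case: m => // m _; split.
  elim: m => [|m IH].
    by rewrite /Rmul_iter /= hr !mul1mx.
  rewrite /Rmul_iter iterS -/(Rmul_iter mul r m.+1 (h i)) IH /=.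
  rewrite -/(W _ _) mulWr /W; congr (_ + _ *: r).
    by apply: eq_bigr => k _; rewrite mxE.
  by rewrite !mxE.
elim: m => [|m IH].
  rewrite /plen /= hr -/(W _ _) mulWW gamma1 /W; congr (_ *: (_ + _ *: r)).
    by apply: eq_bigr => k _; rewrite mul1mx mxE.
  by rewrite mul1mx mxE.
rewrite /plen iterS -/(plen mul m.+1 (mul (h i) r)) IH -/(W _ _).
rewrite mulZl mulZr mulWW !scalerA (gammaS i m.+1) // /W; congr (_ *: (_ + _ *: r)).
- by rewrite expr2; ring.
- by apply: eq_bigr => k _; rewrite ?PS mxE.
by rewrite !mxE.
Qed.
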